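(* For any nonzero proper homogeneous ideal $I$ of a standard graded polynomial ring $A$ over a field, $$\min_{i \ge 1} \operatorname{depth} A/I^i = \min_{i \ge 1} \operatorname{depth} I^{i-1}/I^i.$$
   Context: Convention: $I^0=A$. Depth of a finitely generated graded module is $\min\{i: H^i_{\mathfrak m}(M)\neq0\}$ for the maximal homogeneous ideal $\mathfrak m$ of $A$. *)

(* Defs.v *)
From HB Require Import structures.
From mathcomp Require Import all_boot all_order all_algebra.
From mathcomp Require Import mpoly.
Set Implicit Arguments. Unset Strict Implicit. Unset Printing Implicit Defensive.
Import Order.TTheory GRing.Theory.
Local Open Scope ring_scope.

Section Defs.
Variables (K : fieldType) (n : nat).
Local Notation A := {mpoly K[n]}.

Definition is_ideal (I : A -> Prop) : Prop :=
  [/\ I 0, (forall p q, I p -> I q -> I (p + q)) & (forall a p, I p -> I (a * p))].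

(* Homogeneous (standard grading: every variable has degree 1, i.e. total
   degree mdeg): the ideal contains all homogeneous components of its elements. *)
Definition is_homog_ideal (I : A -> Prop) : Prop :=
  is_ideal I /\ forall p (d : nat), I p -> I (pihomog mdeg d p).

Fixpoint ideal_pow (I : A -> Prop) (k : nat) : A -> Prop :=
  match k with
  | 0 => fun _ => True
  | k'.+1 => fun p => exists s : seq (A * A),
      (forall x, x \in s -> ideal_pow I k' x.1 /\ I x.2) /\
      p = \sum_(x <- s) x.1 * x.2
  end.

(* Local cohomology H^i_m(N/J), m = (x_1,...,x_n), computed by the Cech
   complex on the variables x_1, ..., x_n, for a module N/J with J <= N
   ideals of A.  The Cech module in degree i is the direct sum over index
   sets S (|S| = i) of the localizations (N/J)_{x_S}, x_S = prod_{j in S} x_j.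
   A cochain is given by numerators c S in N over the common denominator
   x_S^t. *)
Definition xS (S : {set 'I_n}) : A := \prod_(j in S) 'X_j.

(* a / x_T^t is zero in (N/J)_{x_T} *)
Definition loc_zero (J : A -> Prop) (T : {set 'I_n}) (r : A) : Prop :=
  exists N : nat, J (xS T ^+ N * r).

Definition cech_sign (T : {set 'I_n}) (j : 'I_n) : A :=
  (-1) ^+ #|[set k in T | (k < j)%N]|.

(* numerator (over x_T^t) of the Cech differential of c at T *)
Definition cech_d (c : {set 'I_n} -> A) (t : nat) (T : {set 'I_n}) : A :=
  \sum_(j in T) cech_sign T j * c (T :\ j) * 'X_j ^+ t.

Definition cochain (N : A -> Prop) (i : nat) (c : {set 'I_n} -> A) : Prop :=
  forall S : {set 'I_n}, #|S| = i -> N (c S).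

Definition cocycle (J : A -> Prop) (i : nat) (c : {set 'I_n} -> A) (t : nat) :=
  forall T : {set 'I_n}, #|T| = i.+1 -> loc_zero J T (cech_d c t T).

Definition coboundary (N J : A -> Prop) (i : nat) (c : {set 'I_n} -> A)
  (t : nat) : Prop :=
  exists (b : {set 'I_n} -> A) (s : nat), cochain N i.-1 b /\
    forall S : {set 'I_n}, #|S| = i ->
      loc_zero J S (cech_d b s S * xS S ^+ t - c S * xS S ^+ s).

Definition loccoh_nonzero (N J : A -> Prop) (i : nat) : Prop :=
  exists (c : {set 'I_n} -> A) (t : nat),
    [/\ cochain N i c, cocycle J i c t & ~ coboundary N J i c t].

(* depth (N/J) >= d, i.e. min{i : H^i_m(N/J) <> 0} >= d (depth of 0 is oo) *)
Definition depth_ge (N J : A -> Prop) (d : nat) : Prop :=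
  forall e : nat, (e < d)%N -> ~ loccoh_nonzero N J e.

End Defs.

(* Main.v *)
(* Proof via the two exactness properties of the Cech long exact sequence. *)
Require Import Defs.
From HB Require Import structures.
From mathcomp Require Import all_boot all_order all_algebra.
From mathcomp Require Import mpoly ring zify.
Set Implicit Arguments. Unset Strict Implicit.
Import GRing.Theory.
Local Open Scope ring_scope.

Section Cech.
Variables (K : fieldType) (n : nat).
Local Notation A := {mpoly K[n]}.
Local Notation xS := (@xS K n).

Lemma antisym_sum (T : {set 'I_n}) (G : 'I_n -> 'I_n -> A) :
  (forall j k, j \in T -> k \in T -> (j < k)%N -> G k j = - G j k) ->
  \sum_(j in T) \sum_(k in T :\ j) G j k = 0.
Proof.
move=> hG.
have e1 : forall j, j \in T -> \sum_(k in T :\ j) G j k =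
   \sum_(k in T | (j < k)%N) G j k + \sum_(k in T | (k < j)%N) G j k.
  move=> j jT; rewrite (bigID (fun k : 'I_n => (j < k)%N)) /=; congr (_ + _);
  apply: eq_bigl => k; rewrite !inE -val_eqE /=;
  by case: (k \in T); case: (ltngtP j k) => //= ->; rewrite eqxx.
rewrite (eq_bigr _ e1) big_split /=.
rewrite (exchange_big_dep (fun k : 'I_n => k \in T)) /=; last by move=> i j _ /andP[].
have e2 : forall k, k \in T -> \sum_(j in T | (k \in T) && (j < k)%N) G j k =
  - \sum_(j in T | (j < k)%N) G k j.
  move=> k kT; rewrite -sumrN; apply: eq_big => [j|j]; first by rewrite kT.
  by case/and3P=> jT _ kj; rewrite (hG j k) // opprK.
by rewrite (eq_bigr _ e2) sumrN addNr.
Qed.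

Lemma cnt_D1 (T : {set 'I_n}) (j k : 'I_n) : j \in T -> (j < k)%N ->
  #|[set l in T | (l < k)%N]| = (#|[set l in T :\ j | (l < k)%N]|).+1.
Proof.
move=> jT jk; rewrite (cardsD1 j) inE jT jk /=; congr (_.+1); apply: eq_card => l.
by rewrite !inE andbA.
Qed.

Lemma cnt_D1' (T : {set 'I_n}) (j k : 'I_n) : (j < k)%N ->
  [set l in T :\ k | (l < j)%N] = [set l in T | (l < j)%N].
Proof.
move=> jk; apply/setP => l; rewrite !inE -val_eqE /=.
case: (ltnP l j) => lj; rewrite ?andbF ?andbT //.
by have -> : (l != k :> nat) by rewrite neq_ltn (ltn_trans lj jk).
Qed.

Lemma d2 (b : {set 'I_n} -> A) s T : cech_d (cech_d b s) s T = 0.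
Proof.
rewrite /cech_d.
transitivity (\sum_(j in T) \sum_(k in T :\ j)
  (@cech_sign K n T j * @cech_sign K n (T :\ j) k * b (T :\ j :\ k) * 'X_k ^+ s * 'X_j ^+ s)).
  apply: eq_bigr => j _; rewrite mulr_sumr mulr_suml; apply: eq_bigr => k _; ring.
apply: antisym_sum => j k jT kT jk.
rewrite /cech_sign (cnt_D1' T jk) (cnt_D1 jT jk) exprS.
have -> : T :\ k :\ j = T :\ j :\ k by apply/setP => l; rewrite !inE andbCA.
ring.
Qed.

Lemma xS_D1 (S : {set 'I_n}) j : j \in S -> xS (S :\ j) * 'X_j = xS S.
Proof. by move=> jS; rewrite /xS (big_setD1 j jS) /= mulrC. Qed.

Lemma cech_d_scale (c : {set 'I_n} -> A) t a u T : u = (t + a)%N ->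
  cech_d (fun S => xS S ^+ a * c S) u T = xS T ^+ a * cech_d c t T.
Proof.
move=> ->; rewrite /cech_d mulr_sumr; apply: eq_bigr => j jT.
rewrite -(xS_D1 jT) exprMn exprD; ring.
Qed.

Lemma cech_d_sub (c1 c2 : {set 'I_n} -> A) t T :
  cech_d (fun S => c1 S - c2 S) t T = cech_d c1 t T - cech_d c2 t T.
Proof.
rewrite /cech_d -sumrB; apply: eq_bigr => j _; ring.
Qed.

Lemma cech_d_add (c1 c2 : {set 'I_n} -> A) t T :
  cech_d (fun S => c1 S + c2 S) t T = cech_d c1 t T + cech_d c2 t T.
Proof.
rewrite /cech_d -big_split; apply: eq_bigr => j _ /=; ring.
Qed.


Lemma ideal_opp (P : A -> Prop) p : is_ideal P -> P p -> P (- p).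
Proof. by case=> _ _ hm hp; rewrite -mulN1r; apply: hm. Qed.

Lemma ideal_sub (P : A -> Prop) p q : is_ideal P -> P p -> P q -> P (p - q).
Proof. move=> iP hp hq; case: (iP) => _ ha _; apply: ha => //; exact: ideal_opp. Qed.

Lemma loc_up (J : A -> Prop) T r N M : is_ideal J -> (N <= M)%N ->
  J (xS T ^+ N * r) -> J (xS T ^+ M * r).
Proof.
case=> _ _ hm NM h; rewrite -(subnK NM) exprD -mulrA; exact: hm.
Qed.

Lemma loc_zero_mul (J : A -> Prop) T r a : is_ideal J ->
  loc_zero J T r -> loc_zero J T (a * r).
Proof.
case=> _ _ hm [N h]; exists N; rewrite mulrCA; exact: hm.
Qed.

Lemma loc_zero_xS (J : A -> Prop) T r m :
  loc_zero J T (xS T ^+ m * r) -> loc_zero J T r.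
Proof. by case=> N h; exists (N + m)%N; rewrite exprD -mulrA. Qed.

Lemma loc_zero_mono (J P : A -> Prop) T r : (forall p, J p -> P p) ->
  loc_zero J T r -> loc_zero P T r.
Proof. by move=> h [N hN]; exists N; apply: h. Qed.

Lemma uniform_N (Pr : {set 'I_n} -> nat -> Prop) e :
  (forall S N M, (N <= M)%N -> Pr S N -> Pr S M) ->
  (forall S : {set 'I_n}, #|S| = e -> exists N, Pr S N) ->
  exists N, forall S : {set 'I_n}, #|S| = e -> Pr S N.
Proof.
move=> mono h.
have gen : forall s : seq {set 'I_n}, exists N, forall S, S \in s -> #|S| = e -> Pr S N.
  elim=> [|S0 s [N hN]]; first by exists 0%N.
  case: (boolP (#|S0| == e)) => [/eqP h0|h0].
    have [N0 hN0] := h S0 h0; exists (maxn N N0) => S; rewrite inE => /orP[/eqP->|Ss] hS.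
      exact: mono (leq_maxr _ _) hN0.
    exact: mono (leq_maxl _ _) (hN S Ss hS).
  exists N => S; rewrite inE => /orP[/eqP-> hS|]; last exact: hN.
  by rewrite hS eqxx in h0.
have [N hN] := gen (enum [set: {set 'I_n}]).
by exists N => S hS; apply: hN hS; rewrite mem_enum inE.
Qed.

Lemma cech_d_set0 (b : {set 'I_n} -> A) s (S : {set 'I_n}) : #|S| = 0%N -> cech_d b s S = 0.
Proof. by move=> /cards0_eq ->; rewrite /cech_d big_set0. Qed.

(* exactness at the middle: H(P/J)=0, H(Q/P)=0 -> H(Q/J)=0 *)
Lemma claim1 (J P Q : A -> Prop) e :
  is_ideal J -> is_ideal P -> is_ideal Q ->
  (forall p, J p -> P p) -> (forall p, P p -> Q p) ->
  ~ loccoh_nonzero P J e -> ~ loccoh_nonzero Q P e -> ~ loccoh_nonzero Q J e.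
Proof.
move=> iJ iP iQ hJP hPQ nHP nHQP [c [t [cc cy ncb]]].
apply: nHQP; exists c, t; split => //.
  by move=> T hT; apply: loc_zero_mono hJP (cy T hT).
move=> [b [s [bc hb]]].
have [N hN] := uniform_N (Pr := fun S N =>
   P (xS S ^+ N * (cech_d b s S * xS S ^+ t - c S * xS S ^+ s))) (e := e)
  (fun S N M NM h => loc_up iP NM h) hb.
pose c' S := xS S ^+ (N + s) * c S - xS S ^+ (N + t) * cech_d b s S.
apply: nHP; exists c', (t + (N + s))%N; split.
- move=> S hS; have := ideal_opp iP (hN S hS).
  by congr P; rewrite /c' !exprD; ring.
- move=> T hT; rewrite /c' cech_d_sub (cech_d_scale c (a:=(N+s)%N) T (erefl _)).
  rewrite (cech_d_scale (cech_d b s) (t:=s) (a:=(N + t)%N)); last by lia.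
  rewrite d2 mulr0 subr0; apply: loc_zero_mul => //; exact: cy.
move=> [b' [s' [b'c hb']]].
apply: ncb; exists (fun R => xS R ^+ s * b' R + xS R ^+ s' * b R), (s' + s)%N; split.
  move=> R hR; case: (iQ) => _ ha hm; apply: ha; apply: hm; [apply: hPQ; exact: b'c | exact: bc].
move=> S hS; apply: (loc_zero_xS (m:=N)).
have := hb' S hS.
rewrite cech_d_add (cech_d_scale b' (t:=s') (a:=s)); last by lia.
rewrite (cech_d_scale b (t:=s) (a:=s')); last by lia.
by congr loc_zero; rewrite /c' !exprD; ring.
Qed.

Lemma claim2 (J P Q : A -> Prop) e :
  is_ideal J -> is_ideal P -> is_ideal Q ->
  (forall p, J p -> P p) -> (forall p, P p -> Q p) ->
  ~ loccoh_nonzero Q J e -> (0 < e -> ~ loccoh_nonzero Q P e.-1)%N ->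
  ~ loccoh_nonzero P J e.
Proof.
move=> iJ iP iQ hJP hPQ nHQJ nHQP [c [t [cc cy ncb]]].
apply: nHQJ; exists c, t; split => //.
  by move=> S hS; apply: hPQ; apply: cc.
move=> [b [s [bc hb]]].
case: e nHQP cc cy ncb bc hb => [|e] nHQP cc cy ncb bc hb.
  apply: ncb; exists (fun _ => 0), s; split; first by move=> S _; case: iP.
  move=> S hS; have := hb S hS; by rewrite !cech_d_set0.
apply: (nHQP isT); exists b, s; split => //.
  move=> T hT; have [M hM] := hb T hT; exists (M + t)%N.
  case: (iP) => _ ha hm.
  have h2 : P (xS T ^+ M * (c T * xS T ^+ s)) by rewrite mulrCA mulrC; apply: hm; exact: cc.
  have := ha _ _ (hJP _ hM) h2; congr P; rewrite exprD; ring.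
move=> [b2 [s2 [b2c hb2]]].
have [N hN] := uniform_N (Pr := fun S N =>
   P (xS S ^+ N * (cech_d b2 s2 S * xS S ^+ s - b S * xS S ^+ s2))) (e := e)
  (fun S N M NM h => loc_up iP NM h) hb2.
apply: ncb.
exists (fun R => xS R ^+ (N + s2) * b R - xS R ^+ (N + s) * cech_d b2 s2 R), (s + (N + s2))%N.
split.
  move=> R hR; have := ideal_opp iP (hN R hR); congr P; rewrite !exprD; ring.
move=> S hS; rewrite cech_d_sub (cech_d_scale b (t:=s) (a:=(N+s2)%N)) //.
rewrite (cech_d_scale (cech_d b2 s2) (t:=s2) (a:=(N + s)%N)); last by lia.
rewrite d2 mulr0 subr0.
have := loc_zero_mul (xS S ^+ (N + s2)) iJ (hb S hS).
by congr loc_zero; rewrite !exprD; ring.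
Qed.

Lemma ideal_pow_ideal (I : A -> Prop) k : is_ideal (ideal_pow I k).
Proof.
elim: k => [|k [h0 ha hm]]; first by split.
split.
- by exists [::]; split => //; rewrite big_nil.
- move=> p q [s1 [h1 ->]] [s2 [h2 ->]]; exists (s1 ++ s2); split; last by rewrite big_cat.
  by move=> x; rewrite mem_cat => /orP[]; [apply: h1 | apply: h2].
- move=> a p [s [h ->]]; exists [seq (a * x.1, x.2) | x <- s]; split.
    move=> x /mapP [y ys ->] /=; have [h1 h2] := h y ys; split => //; exact: hm.
  by rewrite big_map mulr_sumr; apply: eq_bigr => y _; rewrite mulrA.
Qed.

Lemma ideal_pow_sub (I : A -> Prop) k p : ideal_pow I k.+1 p -> ideal_pow I k p.
Proof.
have [h0 ha hm] := ideal_pow_ideal I k.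
move=> [s [h ->]]; elim: s h => [|x s IH] h; first by rewrite big_nil.
rewrite big_cons; apply: ha.
  rewrite mulrC; apply: hm; exact: (h x (mem_head x s)).1.
by apply: IH => y ys; apply: h; rewrite inE ys orbT.
Qed.

Lemma trivial_quot (N : A -> Prop) e : N 0 -> ~ loccoh_nonzero N (fun _ => True) e.
Proof.
move=> h0 [c [t [_ _ ncb]]]; apply: ncb; exists (fun _ => 0), 0%N; split => //.
Qed.
End Cech.
Unset Implicit Arguments.

Theorem lemma4p4 (K : fieldType) (n : nat) (I : {mpoly K[n]} -> Prop) :
  is_homog_ideal I ->
  (exists p, I p /\ p != 0) ->
  ~ I 1 ->
  forall d : nat,
    (forall i : nat, (0 < i)%N -> depth_ge (fun _ => True) (ideal_pow I i) d) <->
    (forall i : nat, (0 < i)%N -> depth_ge (ideal_pow I i.-1) (ideal_pow I i) d).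
Proof.
move=> _ _ _ d; split.
- move=> H i i0 e ed.
  have iT : is_ideal (fun _ : {mpoly K[n]} => True) by [].
  case: i i0 => // i _.
  apply: (claim2 (Q := fun _ => True)) => //; try exact: ideal_pow_ideal.
  + exact: ideal_pow_sub.
  + exact: H.
  + case: i => [|i] e0; first exact: trivial_quot.
    apply: H => //; case: e e0 ed => // e _ /=; exact: ltnW.
- move=> H; elim=> [|i IH] // _ e ed.
  have iT : is_ideal (fun _ : {mpoly K[n]} => True) by [].
  apply: (claim1 (P := ideal_pow I i)) => //; try exact: ideal_pow_ideal.
  + exact: ideal_pow_sub.
  + exact: (H i.+1 isT e ed).
  + case: i IH => [|i] IH; first exact: trivial_quot.
    exact: IH.
Qed.
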